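(* Let $F:(M_1(c),g_1)\to(M_2,g_2)$ be a Riemannian submersion from a complex space form with $\dim M_1=n=2k$ onto a Riemannian manifold with $\dim M_2=m$ and fibre dimension $r=\dim\mathcal V_p>2$. Let $p\in M_1$, $\Pi\subset\mathcal V_p$ a $2$-plane, $\{V_1,\dots,V_r\}$ an orthonormal basis of $\mathcal V_p$ with $\Pi=\mathrm{span}\{V_1,V_2\}$, and $\{h_1,\dots,h_s\}$ an orthonormal basis of $\mathcal H_p$. Then $$\tau^{\ker F_*}_{\mathcal V}(p)-K^{\ker F_*}_{\mathcal V}(\Pi)\ge\frac12\Big\{\frac c4(r^2-r-2)+\frac{3c}4\big(\|Q\|^2-2\,g_1(V_1,QV_2)^2\big)-\frac{r^2(r-2)}{r-1}\|H\|^2\Big\},$$ with equality if and only if Condition (E) holds at $p$ for $\Pi$.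
   Context: A complex space form $M_1(c)$ is a Kähler manifold $(M_1,J,g_1)$ ($\nabla J=0$) of constant holomorphic sectional curvature $c$, whose curvature is $R(Z_1,Z_2)Z_3=\frac c4\{g_1(Z_2,Z_3)Z_1-g_1(Z_1,Z_3)Z_2\}+\frac c4\{g_1(Z_1,JZ_3)JZ_2-g_1(Z_2,JZ_3)JZ_1+2g_1(Z_1,JZ_2)JZ_3\}$. For a tangent vector $Z$ write $JZ=PZ+QZ$ with $PZ\in\mathcal H$, $QZ\in\mathcal V$, and $\|Q\|^2=\sum_{i,j=1}^r g_1(QV_i,V_j)^2$. Let $(M_1,g_1)$, $(M_2,g_2)$ be Riemannian manifolds, $\dim M_1=n$, $\dim M_2=m$, and $F:M_1\to M_2$ a Riemannian submersion (a surjective smooth map whose differential $F_{*p}$ is surjective at every $p$ and preserves the length of horizontal vectors). Write $\mathcal V=\ker F_*$ (vertical distribution), $\mathcal H=(\ker F_* )^\perp$ (horizontal distribution), $r=\dim\mathcal V_p=n-m$, $s=\dim\mathcal H_p=m$; $v,h$ denote the orthogonal projections onto $\mathcal V,\mathcal H$, and $\nabla$ the Levi-Civita connection of $g_1$. O'Neill's tensor: $\mathcal T_EF=h\nabla_{vE}vF+v\nabla_{vE}hF$. Curvature convention: $R^{M_1}(X,Y,Z,W)=g_1(R^{M_1}(X,Y)Z,W)$, normalized so that $R^{M_1}(X,Y,Y,X)$ is the sectional curvature of the plane spanned by orthonormal $X,Y$. The curvature $R^{\ker F_*}$ of the fibres is related to $R^{M_1}$ (as used in the paper) by: for vertical $F_1,\dots,F_4$,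 $R^{M_1}(F_1,F_2,F_3,F_4)=R^{\ker F_*}(F_1,F_2,F_3,F_4)+g_1(\mathcal T_{F_1}F_4,\mathcal T_{F_2}F_3)-g_1(\mathcal T_{F_2}F_4,\mathcal T_{F_1}F_3)$. With the chosen orthonormal bases at $p$: $(\mathcal T^{\mathcal H})^\ell_{ij}=g_1(\mathcal T_{V_i}V_j,h_\ell)$; the mean curvature vector of the fibres is $H=\frac1r\sum_{i=1}^r\mathcal T_{V_i}V_i$; $\tau^{\ker F_*}_{\mathcal V}(p)=\frac12\sum_{i,j=1}^rR^{\ker F_*}(V_i,V_j,V_j,V_i)$, $K^{\ker F_*}_{\mathcal V}(\Pi)=R^{\ker F_*}(V_1,V_2,V_2,V_1)$ for $\Pi=\mathrm{span}\{V_1,V_2\}$. Condition (E) at $p$ for $\Pi$: there exist orthonormal bases $\{V_1,\dots,V_r\}$ of $\mathcal V_p$ with $\Pi=\mathrm{span}\{V_1,V_2\}$ and $\{h_1,\dots,h_s\}$ of $\mathcal H_p$ with $h_1=H(p)/\|H(p)\|$ if $H(p)\neq0$ ($h_1$ arbitrary if $H(p)=0$), such that: $(\mathcal T^{\mathcal H})^\ell_{1j}=(\mathcal T^{\mathcal H})^\ell_{2j}=0$ for $j>2$, $\ell=1,\dots,s$; $(\mathcal T^{\mathcal H})^1_{ij}=0$ for $i\ne j$, $i,j>2$; $(\mathcal T^{\mathcal H})^\ell_{ij}=0$ for $i,j>2$, $\ell=2,\dots,s$; $(\mathcal T^{\mathcal H})^\ell_{11}+(\mathcal T^{\mathcal H})^\ell_{22}=0$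 for $\ell=2,\dots,s$; and $(\mathcal T^{\mathcal H})^1_{11}+(\mathcal T^{\mathcal H})^1_{22}=(\mathcal T^{\mathcal H})^1_{33}=\cdots=(\mathcal T^{\mathcal H})^1_{rr}$. *)

(* Defs.v *)
From HB Require Import structures.
From mathcomp Require Import all_boot all_order all_algebra.
From mathcomp Require Import reals.
Set Implicit Arguments. Unset Strict Implicit. Unset Printing Implicit Defensive.
Import Order.TTheory GRing.Theory Num.Theory.
Local Open Scope ring_scope.

(* Pointwise model: the tangent space T_p M_1 is 'rV[R]_n with the standard
   inner product g_1(u,v) = u v^T; a tangent endomorphism A acts by u |-> u *m A. *)
Definition gdot (R : ringType) (n : nat) (u v : 'rV[R]_n) : R := (u *m v^T) 0 0.

Definition RM (R : realType) (n : nat) (c : R) (J : 'M[R]_n)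
  (X Y Z W : 'rV[R]_n) : R :=
  gdot (c / 4 *: (gdot Y Z *: X - gdot X Z *: Y)
        + c / 4 *: (gdot X (Z *m J) *: (Y *m J) - gdot Y (Z *m J) *: (X *m J)
                    + (2 * gdot X (Y *m J)) *: (Z *m J))) W.

(* Curvature of the fibres, through the Gauss-type equation of the paper:
   R^{M_1}(F1,F2,F3,F4) = R^{ker}(F1,F2,F3,F4) + g(T_{F1}F4, T_{F2}F3) - g(T_{F2}F4, T_{F1}F3). *)
Definition Rker (R : realType) (n : nat) (c : R) (J : 'M[R]_n)
  (T : 'rV[R]_n -> 'rV[R]_n -> 'rV[R]_n) (X Y Z W : 'rV[R]_n) : R :=
  RM c J X Y Z W - gdot (T X W) (T Y Z) + gdot (T Y W) (T X Z).

(* Bases are indexed by nat; only the indices 0..r-1 (resp. 0..s-1) matter.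
   Index 0 is the paper's V_1, index 1 is V_2, etc. *)
Definition orthonormal (R : realType) (n r : nat) (V : nat -> 'rV[R]_n) : Prop :=
  forall i j, (i < r)%N -> (j < r)%N -> gdot (V i) (V j) = (i == j)%:R.

(* {V_0..V_{r-1}} orthonormal basis of the vertical space (row space of Vsp, of rank r). *)
Definition isVbasis (R : realType) (n : nat) (Vsp : 'M[R]_n) (r : nat)
  (V : nat -> 'rV[R]_n) : Prop :=
  orthonormal r V /\ (forall i, (i < r)%N -> (V i <= Vsp)%MS).

Definition horizontal (R : realType) (n : nat) (Vsp : 'M[R]_n) (u : 'rV[R]_n) : Prop :=
  u *m Vsp^T = 0.

Definition isHbasis (R : realType) (n : nat) (Vsp : 'M[R]_n) (s : nat)
  (h : nat -> 'rV[R]_n) : Prop :=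
  orthonormal s h /\ (forall l, (l < s)%N -> horizontal Vsp (h l)).

Definition meanCurv (R : realType) (n : nat) (T : 'rV[R]_n -> 'rV[R]_n -> 'rV[R]_n)
  (r : nat) (V : nat -> 'rV[R]_n) : 'rV[R]_n :=
  (r%:R)^-1 *: \sum_(i < r) T (V i) (V i).

Definition normsq (R : realType) (n : nat) (u : 'rV[R]_n) : R := gdot u u.

Definition tauV (R : realType) (n : nat) (c : R) (J : 'M[R]_n)
  (T : 'rV[R]_n -> 'rV[R]_n -> 'rV[R]_n) (r : nat) (V : nat -> 'rV[R]_n) : R :=
  2^-1 * \sum_(i < r) \sum_(j < r) Rker c J T (V i) (V j) (V j) (V i).

Definition KV (R : realType) (n : nat) (c : R) (J : 'M[R]_n)
  (T : 'rV[R]_n -> 'rV[R]_n -> 'rV[R]_n) (V : nat -> 'rV[R]_n) : R :=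
  Rker c J T (V 0%N) (V 1%N) (V 1%N) (V 0%N).

Definition vpart (R : realType) (n r : nat) (V : nat -> 'rV[R]_n) (u : 'rV[R]_n) : 'rV[R]_n :=
  \sum_(i < r) gdot u (V i) *: V i.

Definition Qop (R : realType) (n r : nat) (J : 'M[R]_n) (V : nat -> 'rV[R]_n)
  (u : 'rV[R]_n) : 'rV[R]_n := vpart r V (u *m J).

Definition normQ2 (R : realType) (n r : nat) (J : 'M[R]_n) (V : nat -> 'rV[R]_n) : R :=
  \sum_(i < r) \sum_(j < r) (gdot (Qop r J V (V i)) (V j)) ^+ 2.

(* Condition (E) at p for Pi = span{V 0, V 1} (0-based indices: the paper's
   "j > 2" becomes 2 <= j, "l = 2..s" becomes 1 <= l < s, h_1 is h' 0). *)
Definition condE (R : realType) (n : nat) (Vsp : 'M[R]_n)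
  (T : 'rV[R]_n -> 'rV[R]_n -> 'rV[R]_n) (r s : nat) (V : nat -> 'rV[R]_n) : Prop :=
  exists V' h' : nat -> 'rV[R]_n,
    [/\ isVbasis Vsp r V', isHbasis Vsp s h',
        (col_mx (V' 0%N) (V' 1%N) == col_mx (V 0%N) (V 1%N))%MS,
        (let H := meanCurv T r V' in
         H != 0 -> h' 0%N = (Num.sqrt (normsq H))^-1 *: H) &
        (let Tc l i j := gdot (T (V' i) (V' j)) (h' l) in
         [/\ (forall l j, (l < s)%N -> (2 <= j < r)%N -> Tc l 0%N j = 0 /\ Tc l 1%N j = 0),
             (forall i j, (2 <= i < r)%N -> (2 <= j < r)%N -> i <> j -> Tc 0%N i j = 0),
             (forall l i j, (1 <= l < s)%N -> (2 <= i < r)%N -> (2 <= j < r)%N -> Tc l i j = 0),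
             (forall l, (1 <= l < s)%N -> Tc l 0%N 0%N + Tc l 1%N 1%N = 0) &
             (forall j, (2 <= j < r)%N -> Tc 0%N 0%N 0%N + Tc 0%N 1%N 1%N = Tc 0%N j j)])].

(* Main.v *)
Require Import Defs.
From HB Require Import structures.
From mathcomp Require Import all_boot all_order all_algebra.
From mathcomp Require Import reals.
From mathcomp Require Import ring lra.
Import Order.TTheory GRing.Theory Num.Theory.
Set Implicit Arguments. Unset Strict Implicit.
Local Open Scope ring_scope.
Lemma gdotE (R : realType) n (u v : 'rV[R]_n) : gdot u v = \sum_j u 0 j * v 0 j.
Proof. by rewrite /gdot mxE; apply: eq_bigr => j _; rewrite mxE. Qed.

Lemma gdotC (R : realType) n (u v : 'rV[R]_n) : gdot u v = gdot v u.
Proof. by rewrite !gdotE; apply: eq_bigr => j _; rewrite mulrC. Qed.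

Lemma gdotDl (R : realType) n (u w v : 'rV[R]_n) : gdot (u + w) v = gdot u v + gdot w v.
Proof. by rewrite !gdotE -big_split; apply: eq_bigr => j _; rewrite mxE mulrDl. Qed.

Lemma gdotZl (R : realType) n a (u v : 'rV[R]_n) : gdot (a *: u) v = a * gdot u v.
Proof. by rewrite !gdotE mulr_sumr; apply: eq_bigr => j _; rewrite mxE mulrA. Qed.

Lemma gdotNl (R : realType) n (u v : 'rV[R]_n) : gdot (- u) v = - gdot u v.
Proof. by rewrite -scaleN1r gdotZl mulN1r. Qed.

Lemma gdotBl (R : realType) n (u w v : 'rV[R]_n) : gdot (u - w) v = gdot u v - gdot w v.
Proof. by rewrite gdotDl gdotNl. Qed.

Lemma gdot0l (R : realType) n (v : 'rV[R]_n) : gdot 0 v = 0.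
Proof. by rewrite gdotE big1 // => j _; rewrite mxE mul0r. Qed.

Lemma gdotDr (R : realType) n (u w v : 'rV[R]_n) : gdot v (u + w) = gdot v u + gdot v w.
Proof. by rewrite !(gdotC v) gdotDl. Qed.
Lemma gdotZr (R : realType) n a (u v : 'rV[R]_n) : gdot v (a *: u) = a * gdot v u.
Proof. by rewrite !(gdotC v) gdotZl. Qed.
Lemma gdotNr (R : realType) n (u v : 'rV[R]_n) : gdot v (- u) = - gdot v u.
Proof. by rewrite !(gdotC v) gdotNl. Qed.
Lemma gdotBr (R : realType) n (u w v : 'rV[R]_n) : gdot v (u - w) = gdot v u - gdot v w.
Proof. by rewrite !(gdotC v) gdotBl. Qed.
Lemma gdot0r (R : realType) n (v : 'rV[R]_n) : gdot v 0 = 0.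
Proof. by rewrite gdotC gdot0l. Qed.

Lemma gdot_suml (R : realType) n (I : Type) (s : seq I) (P : pred I) (f : I -> 'rV[R]_n) v :
  gdot (\sum_(i <- s | P i) f i) v = \sum_(i <- s | P i) gdot (f i) v.
Proof.
elim/big_rec2: _ => [|i x y _ <-]; first by rewrite gdot0l.
by rewrite gdotDl.
Qed.

Lemma gdot_sumr (R : realType) n (I : Type) (s : seq I) (P : pred I) (f : I -> 'rV[R]_n) v :
  gdot v (\sum_(i <- s | P i) f i) = \sum_(i <- s | P i) gdot v (f i).
Proof. by rewrite gdotC gdot_suml; apply: eq_bigr => i _; rewrite gdotC. Qed.

Lemma gdot_ge0 (R : realType) n (u : 'rV[R]_n) : 0 <= gdot u u.
Proof. by rewrite gdotE; apply: sumr_ge0 => j _; rewrite -expr2 sqr_ge0. Qed.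

Lemma gdot_eq0 (R : realType) n (u : 'rV[R]_n) : gdot u u = 0 -> u = 0.
Proof.
rewrite gdotE => H; apply/rowP => j; rewrite mxE.
have H' : \sum_j (u 0 j) ^+ 2 = 0 
  by rewrite -[RHS]H; apply: eq_bigr => i _; rewrite expr2.
have := @psumr_eq0P _ _ predT (fun j => u 0 j ^+ 2) (fun j _ => sqr_ge0 (u 0 j)) H' j isT.
by move=> /eqP; rewrite sqrf_eq0 => /eqP.
Qed.

Lemma sum3 (V : nmodType) r (F : nat -> V) : (2 <= r)%N ->
  \sum_(i < r) F i = F 0%N + F 1%N + \sum_(2 <= i < r) F i.
Proof.
move=> hr; rewrite -(big_mkord xpredT) big_ltn; last by apply: leq_trans hr.
by rewrite big_ltn // addrA.
Qed.

Definition VC (R : realType) n r (t : nat -> nat -> 'rV[R]_n) : Prop :=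
  [/\ (forall j, (2 <= j < r)%N -> t 0%N j = 0 /\ t 1%N j = 0),
      (forall i j, (2 <= i < r)%N -> (2 <= j < r)%N -> i <> j -> t i j = 0) &
      (forall i, (2 <= i < r)%N -> t i i = t 0%N 0%N + t 1%N 1%N)].

Definition Dt (R : realType) n r (t : nat -> nat -> 'rV[R]_n) : R :=
  2^-1 * (\sum_(i < r) \sum_(j < r) (gdot (t j i) (t i j) - gdot (t i i) (t j j)))
  + gdot (t 0%N 0%N) (t 1%N 1%N) - gdot (t 1%N 0%N) (t 0%N 1%N)
  + 2^-1 * (r%:R ^+ 2 * (r%:R - 2) / (r%:R - 1) *
       normsq ((r%:R)^-1 *: \sum_(i < r) t i i)).

Lemma Dt_decomp (R : realType) n r (t : nat -> nat -> 'rV[R]_n) :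
  (3 <= r)%N -> (forall i j, (i < r)%N -> (j < r)%N -> t i j = t j i) ->
  let S := \sum_(i < r) t i i in
  let mu := (r%:R - 1)^-1 *: S in
  let nn i j := gdot (t i j) (t i j) in
  Dt r t = 2^-1 * (2 * (\sum_(2 <= j < r) nn 0%N j + \sum_(2 <= j < r) nn 1%N j)
     + \sum_(2 <= i < r) \sum_(2 <= j < r | j != i) nn i j
     + gdot (t 0%N 0%N + t 1%N 1%N - mu) (t 0%N 0%N + t 1%N 1%N - mu)
     + \sum_(2 <= i < r) gdot (t i i - mu) (t i i - mu)).
Proof.
move=> hr sym S mu nn.
have hr2 : (2 <= r)%N by apply: ltnW.
have r3 : (3 : R) <= r%:R by rewrite (ler_nat R 3 r).
have r1 : (r%:R - 1 : R) != 0 by apply/eqP => h; lra.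
have r0 : (r%:R : R) != 0 by rewrite pnatr_eq0 -lt0n; apply: leq_trans hr.
set a := t 0%N 0%N + t 1%N 1%N.
set P := \sum_(2 <= i < r) t i i.
have hS : S = a + P by rewrite /S (sum3 (fun i => t i i)).
set E0 := \sum_(2 <= j < r) nn 0%N j.
set E1 := \sum_(2 <= j < r) nn 1%N j.
set Off := \sum_(2 <= i < r) \sum_(2 <= j < r | j != i) nn i j.
set Dg := \sum_(2 <= i < r) nn i i.
have hN : \sum_(i < r) \sum_(j < r) (gdot (t j i) (t i j) - gdot (t i i) (t j j))
   = \sum_(i < r) \sum_(j < r) nn i j - gdot S S.
  rewrite /S gdot_suml -sumrB; apply: eq_bigr => i _.
  rewrite gdot_sumr -sumrB; apply: eq_bigr => j _.
  by rewrite sym.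
have hN2 : \sum_(i < r) \sum_(j < r) nn i j =
    nn 0%N 0%N + 2 * nn 0%N 1%N + nn 1%N 1%N + 2 * E0 + 2 * E1 + Dg + Off.
  rewrite (eq_bigr (fun i : 'I_r => nn i 0%N + nn i 1%N + \sum_(2 <= j < r) nn i j));
    last by move=> i _; rewrite (sum3 (fun j => nn i j)).
  rewrite (sum3 (fun i => nn i 0%N + nn i 1%N + \sum_(2 <= j < r) nn i j)) //.
  rewrite !big_split /=.
  have e0 : \sum_(2 <= i < r) nn i 0%N = E0.
    apply: eq_big_nat => i /andP [_ hi]; rewrite /nn sym //; exact: leq_trans hr.
  have e1 : \sum_(2 <= i < r) nn i 1%N = E1.
    apply: eq_big_nat => i /andP [_ hi]; rewrite /nn sym //; exact: leq_trans hr.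
  have e2 : \sum_(2 <= i < r) \sum_(2 <= j < r) nn i j = Dg + Off.
    rewrite /Dg /Off -big_split; apply: eq_big_nat => i hi.
    by rewrite (bigD1_seq i) ?mem_index_iota ?iota_uniq.
  have e3 : nn 1%N 0%N = nn 0%N 1%N by rewrite /nn sym //; apply: leq_trans hr.
  rewrite e0 e1 e2 e3 -/E0 -/E1; ring.
have hmu : gdot S mu = (r%:R - 1)^-1 * gdot S S by rewrite gdotZr.
have hmumu : gdot mu mu = (r%:R - 1)^-2 * gdot S S.
  by rewrite gdotZl gdotZr mulrA -expr2 exprVn.
have hsum : \sum_(2 <= i < r) gdot (t i i - mu) (t i i - mu)
   = Dg - 2 * gdot P mu + (r%:R - 2) * gdot mu mu.
  rewrite (eq_bigr (fun i => nn i i - 2 * gdot (t i i) mu + gdot mu mu)); last first.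
    move=> i _; rewrite !gdotBl !gdotBr (gdotC mu (t i i)) /nn; ring.
  rewrite big_split sumrB sumr_const_nat /P gdot_suml -mulr_sumr.
  by rewrite -(mulr_natl (gdot mu mu) (r - 2)) natrB.
have ha : gdot a a = nn 0%N 0%N + 2 * gdot (t 0%N 0%N) (t 1%N 1%N) + nn 1%N 1%N.
  rewrite /a !gdotDl !gdotDr (gdotC (t 1%N 1%N)) /nn; ring.
have ham : gdot (a - mu) (a - mu) = gdot a a - 2 * gdot a mu + gdot mu mu.
  rewrite !gdotBl !gdotBr (gdotC mu a); ring.
have hSmu : gdot S mu = gdot a mu + gdot P mu by rewrite hS gdotDl.
have hSS : normsq ((r%:R)^-1 *: S) = (r%:R)^-2 * gdot S S.
  by rewrite /normsq gdotZl gdotZr mulrA -expr2 exprVn.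
rewrite /Dt -/S hN hN2 hSS ham hsum ha.
have -> : gdot (t 1%N 0%N) (t 0%N 1%N) = nn 0%N 1%N.
  by rewrite /nn sym //; apply: leq_trans hr.
have -> : gdot a mu = gdot S mu - gdot P mu by rewrite hSmu; ring.
rewrite hmu hmumu -/E0 -/E1 -/Off -/Dg.
field; rewrite r0 r1 //.
Qed.

Lemma sum_nat_eq0 (R : realType) m n (P : pred nat) (F : nat -> R) :
  (forall i, 0 <= F i) -> \sum_(m <= i < n | P i) F i = 0 ->
  forall i, (m <= i < n)%N -> P i -> F i = 0.
Proof.
move=> F0 /eqP; rewrite psumr_eq0; last by move=> i _; apply: F0.
move=> /allP H i hi Pi; have := H i; rewrite mem_index_iota hi Pi /=.
by move=> /(_ isT) /eqP.
Qed.

Lemma sum_nat_ge0 (R : realType) m n (P : pred nat) (F : nat -> R) :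
  (forall i, 0 <= F i) -> 0 <= \sum_(m <= i < n | P i) F i.
Proof. by move=> F0; apply: sumr_ge0 => i _. Qed.

Lemma Dt_prop (R : realType) n r (t : nat -> nat -> 'rV[R]_n) :
  (3 <= r)%N -> (forall i j, (i < r)%N -> (j < r)%N -> t i j = t j i) ->
  0 <= Dt r t /\ (Dt r t = 0 <-> VC r t).
Proof.
move=> hr sym; rewrite (Dt_decomp hr sym) /=.
set S := \sum_(i < r) t i i.
set mu := (r%:R - 1)^-1 *: S.
set nn := fun i j => gdot (t i j) (t i j).
have nn0 : forall i j, 0 <= nn i j by move=> i j; apply: gdot_ge0.
set E0 := \sum_(2 <= j < r) nn 0%N j.
set E1 := \sum_(2 <= j < r) nn 1%N j.
set Off := \sum_(2 <= i < r) \sum_(2 <= j < r | j != i) nn i j.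
set A := gdot _ _.
set B := \sum_(2 <= i < r) gdot (t i i - mu) (t i i - mu).
have E00 : 0 <= E0 by apply: sum_nat_ge0.
have E10 : 0 <= E1 by apply: sum_nat_ge0.
have Off0 : 0 <= Off by apply: sum_nat_ge0 => i; apply: sum_nat_ge0.
have A0 : 0 <= A by apply: gdot_ge0.
have B0 : 0 <= B by apply: sum_nat_ge0 => i; apply: gdot_ge0.
split; first by apply: mulr_ge0 => //; lra.
split.
- move=> H.
  have [hE0 [hE1 [hOff [hA hB]]]] : [/\ E0 = 0, E1 = 0, Off = 0, A = 0 & B = 0] by
    split; lra.
  have hmu : t 0%N 0%N + t 1%N 1%N = mu by apply/eqP; rewrite -subr_eq0; apply/eqP/gdot_eq0.
  split.
  + move=> j hj; split; apply: gdot_eq0.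
    * exact: (sum_nat_eq0 (nn0 0%N) hE0 hj isT).
    * exact: (sum_nat_eq0 (nn0 1%N) hE1 hj isT).
  + move=> i j hi hj hij; apply: gdot_eq0.
    have := sum_nat_eq0 (fun i => sum_nat_ge0 _ _ _ (nn0 i)) hOff hi isT.
    move=> h; apply: (sum_nat_eq0 (nn0 i) h hj).
    by apply/eqP => e; apply: hij.
  + move=> i hi; rewrite hmu; apply/eqP; rewrite -subr_eq0; apply/eqP/gdot_eq0.
    exact: (sum_nat_eq0 (fun i => gdot_ge0 (t i i - mu)) hB hi isT).
- move=> [h1 h2 h3].
  have hS : S = (r%:R - 1) *: (t 0%N 0%N + t 1%N 1%N).
    rewrite /S (sum3 (fun i => t i i)); last by apply: ltnW.
    rewrite (eq_big_nat _ _ h3) sumr_const_nat -scaler_nat.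
    rewrite -[X in X + _ = _]scale1r -scalerDl.
    congr (_ *: _); rewrite natrB; last by apply: ltnW.
    ring.
  have r3 : (3 : R) <= r%:R by rewrite (ler_nat R 3 r).
  have hmu : mu = t 0%N 0%N + t 1%N 1%N.
    rewrite /mu hS scalerA mulVf ?scale1r //; apply/eqP => h; lra.
  have -> : E0 = 0.
    by rewrite /E0 big1_seq // => j; rewrite mem_index_iota => hj; rewrite /nn (h1 j hj).1 gdot0l.
  have -> : E1 = 0.
    by rewrite /E1 big1_seq // => j; rewrite mem_index_iota => hj; rewrite /nn (h1 j hj).2 gdot0l.
  have -> : Off = 0.
    rewrite /Off big1_seq // => i; rewrite mem_index_iota => hi.
    rewrite big1_seq // => j /andP [hij]; rewrite mem_index_iota => hj.
    by rewrite /nn (h2 i j hi hj) ?gdot0l // => e; rewrite e eqxx in hij.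
  have -> : A = 0 by rewrite /A hmu subrr gdot0l.
  have -> : B = 0.
    by rewrite /B big1_seq // => i; rewrite mem_index_iota => hi; rewrite (h3 i hi) hmu subrr gdot0l.
  by rewrite !(addr0, mulr0).
Qed.

Lemma sum_delta (R : realType) p (a : nat -> R) j : (j < p)%N ->
  \sum_(i < p) a i * (i == j :> nat)%:R = a j.
Proof.
move=> hj; rewrite (bigD1 (Ordinal hj)) //= eqxx mulr1 big1 ?addr0 // => i hi.
by rewrite eqn_leq; move: hi; rewrite -val_eqE /= eqn_leq => /negbTE ->; rewrite mulr0.
Qed.

Lemma sum_delta_r (R : realType) p (a : nat -> R) j : (j < p)%N ->
  \sum_(i < p) a i * (j == i :> nat)%:R = a j.
Proof.
by move=> hj; rewrite -(sum_delta a hj); apply: eq_bigr => i _; rewrite eq_sym.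
Qed.

Lemma rank_orthonormal (R : realType) n p (f : nat -> 'rV[R]_n) :
  Defs.orthonormal p f -> \rank (\matrix_(i < p) f i) = p.
Proof.
move=> hf; set A := \matrix_(i < p) f i.
have G : A *m A^T = 1%:M.
  apply/matrixP => i j; rewrite !mxE.
  rewrite -(hf i j (ltn_ord i) (ltn_ord j)) gdotE; apply: eq_bigr => k _.
  by rewrite !mxE.
apply/eqP; rewrite eqn_leq rank_leq_row /=.
by rewrite -{1}(mxrank1 R p) -G mxrankM_maxl.
Qed.

Lemma horiz_orth (R : realType) n (Vsp : 'M[R]_n) u v :
  horizontal Vsp u -> (v <= Vsp)%MS -> gdot u v = 0.
Proof.
move=> hu /submxP [D ->]; rewrite /gdot trmx_mul mulmxA.
by move: hu; rewrite /horizontal => ->; rewrite mul0mx mxE.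
Qed.

Lemma expand_gen (R : realType) n p (U : 'M[R]_n) (f : nat -> 'rV[R]_n) :
  Defs.orthonormal p f -> (forall i, (i < p)%N -> (f i <= U)%MS) -> \rank U = p ->
  forall u, (u <= U)%MS -> u = \sum_(i < p) gdot u (f i) *: f i.
Proof.
move=> hf fU rU u uU.
set w := u - \sum_(i < p) gdot u (f i) *: f i.
suff : w = 0 by move/eqP; rewrite subr_eq0 => /eqP.
have wU : (w <= U)%MS.
  apply: addmx_sub => //; rewrite -scaleN1r; apply: scalemx_sub.
  by apply: summx_sub => i _; apply: scalemx_sub; apply: fU.
have wf : forall j, (j < p)%N -> gdot w (f j) = 0.
  move=> j hj; rewrite gdotBl gdot_suml.
  rewrite (eq_bigr (fun i : 'I_p => gdot u (f i) * (i == j :> nat)%:R)).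
    by rewrite (sum_delta (fun i => gdot u (f i))) // subrr.
  by move=> i _; rewrite gdotZl hf.
apply/eqP; apply/negPn/negP => wn0.
have ww : 0 < gdot w w.
  rewrite lt_def gdot_ge0 andbT; apply/eqP => /gdot_eq0 h; by rewrite h eqxx in wn0.
set s := Num.sqrt (gdot w w).
have s0 : 0 < s by rewrite sqrtr_gt0.
set e := s^-1 *: w.
have ee : gdot e e = 1.
  rewrite gdotZl gdotZr mulrA -expr2 exprVn sqr_sqrtr ?mulVf //.
    by apply/eqP => h; rewrite h ltxx in ww.
  exact: ltW.
set g := fun i : nat => if (i < p)%N then f i else e.
have hg : Defs.orthonormal p.+1 g.
  move=> i j hi hj; rewrite /g.
  case: (ltnP i p) => hip; case: (ltnP j p) => hjp.
  - exact: hf.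
  - have -> : j = p by apply/eqP; rewrite eqn_leq hjp -ltnS hj.
    rewrite gdotZr gdotC wf // mulr0.
    by have := hip; rewrite ltn_neqAle => /andP [/negbTE ->].
  - have -> : i = p by apply/eqP; rewrite eqn_leq hip -ltnS hi.
    rewrite gdotZl wf // mulr0.
    by have := hjp; rewrite ltn_neqAle eq_sym => /andP [/negbTE ->].
  - have -> : i = p by apply/eqP; rewrite eqn_leq hip -ltnS hi.
    have -> : j = p by apply/eqP; rewrite eqn_leq hjp -ltnS hj.
    by rewrite ee eqxx.
have := rank_orthonormal hg.
have sub : ((\matrix_(i < p.+1) g i) <= U)%MS.
  apply/row_subP => i; rewrite rowK /g; case: ifP => hi.
  - by apply: fU.
  - exact: scalemx_sub.
move=> hr; have := mxrankS sub; rewrite hr rU ltnn //.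
Qed.

Lemma expand_V (R : realType) n r (Vsp : 'M[R]_n) (V : nat -> 'rV[R]_n) :
  isVbasis Vsp r V -> \rank Vsp = r ->
  forall u, (u <= Vsp)%MS -> u = \sum_(i < r) gdot u (V i) *: V i.
Proof. by move=> [hV1 hV2] hr; apply: expand_gen. Qed.

Lemma expand_h (R : realType) n m (Vsp : 'M[R]_n) (h : nat -> 'rV[R]_n) :
  isHbasis Vsp m h -> \rank Vsp = (n - m)%N -> (m <= n)%N ->
  forall u, horizontal Vsp u -> u = \sum_(i < m) gdot u (h i) *: h i.
Proof.
move=> [hh1 hh2] hr hmn u hu.
apply: (@expand_gen _ _ _ (kermx Vsp^T)) => //.
- by move=> i hi; apply/sub_kermxP; apply: hh2.
- by rewrite mxrank_ker mxrank_tr hr subKn.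
- by apply/sub_kermxP.
Qed.

Lemma horiz_zero (R : realType) n m (Vsp : 'M[R]_n) (h : nat -> 'rV[R]_n) :
  isHbasis Vsp m h -> \rank Vsp = (n - m)%N -> (m <= n)%N ->
  forall u, horizontal Vsp u -> (forall l, (l < m)%N -> gdot u (h l) = 0) -> u = 0.
Proof.
move=> hh hr hmn u hu h0; rewrite (expand_h hh hr hmn hu).
by rewrite big1 // => i _; rewrite h0 // scale0r.
Qed.

Lemma linR_sum (R : realType) n (f : 'rV[R]_n -> R) :
  (forall a u v, f (a *: u + v) = a * f u + f v) ->
  forall (I : Type) (s : seq I) (P : pred I) (c : I -> R) (x : I -> 'rV[R]_n),
  f (\sum_(i <- s | P i) c i *: x i) = \sum_(i <- s | P i) c i * f (x i).
Proof.
move=> hf I s P c x.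
have f0 : f 0 = 0.
  have := hf 1 0 0; rewrite scaler0 addr0 mul1r => h; lra.
elim/big_rec2: _ => [//|i y z _ <-]; by rewrite hf.
Qed.

Lemma linV_sum (R : realType) n (f : 'rV[R]_n -> 'rV[R]_n) :
  (forall a u v, f (a *: u + v) = a *: f u + f v) ->
  forall (I : Type) (s : seq I) (P : pred I) (c : I -> R) (x : I -> 'rV[R]_n),
  f (\sum_(i <- s | P i) c i *: x i) = \sum_(i <- s | P i) c i *: f (x i).
Proof.
move=> hf I s P c x.
have f0 : f 0 = 0.
  have := hf 1 0 0; rewrite scaler0 addr0 scale1r => h.
  by rewrite -[X in X = _]addr0 in h; move/addrI: h => <-.
elim/big_rec2: _ => [//|i y z _ <-]; by rewrite hf.
Qed.

Lemma trace_inv (R : realType) n r (Vsp : 'M[R]_n) (V W : nat -> 'rV[R]_n)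
  (B : 'rV[R]_n -> 'rV[R]_n -> R) :
  isVbasis Vsp r V -> isVbasis Vsp r W -> \rank Vsp = r ->
  (forall a u v w, B (a *: u + v) w = a * B u w + B v w) ->
  (forall a u v w, B w (a *: u + v) = a * B w u + B w v) ->
  \sum_(i < r) B (V i) (V i) = \sum_(i < r) B (W i) (W i).
Proof.
move=> hV hW hr hBl hBr.
have eV := expand_V hV hr; have eW := expand_V hW hr.
have VW : forall i, (i < r)%N -> V i = \sum_(k < r) gdot (V i) (W k) *: W k.
  by move=> i hi; apply: eW; apply: hV.2.
have WV : forall i, (i < r)%N -> W i = \sum_(k < r) gdot (W i) (V k) *: V k.
  by move=> i hi; apply: eV; apply: hW.2.
have step : forall i : 'I_r, B (V i) (V i) =
   \sum_(k < r) \sum_(l < r) (gdot (V i) (W k) * gdot (V i) (W l)) * B (W k) (W l).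
  move=> i; have e := VW i (ltn_ord i).
  transitivity (B (\sum_(k < r) gdot (V i) (W k) *: W k) (\sum_(k < r) gdot (V i) (W k) *: W k));
    first by rewrite -e.
  rewrite (linR_sum (f := fun x => B x _)); last by move=> *; apply: hBl.
  apply: eq_bigr => k _.
  rewrite (linR_sum (f := fun x => B (W k) x)); last by move=> *; apply: hBr.
  rewrite mulr_sumr; apply: eq_bigr => l _; ring.
rewrite (eq_bigr _ (fun i _ => step i)) exchange_big /=.
apply: eq_bigr => k _; rewrite exchange_big /=.
rewrite (eq_bigr (fun l : 'I_r => B (W k) (W l) * (k == l :> nat)%:R)).
  by rewrite (sum_delta_r (fun l => B (W k) (W l))).
move=> l _; rewrite -mulr_suml mulrC; congr (_ * _).
rewrite -(hW.1 k l (ltn_ord k) (ltn_ord l)) {2}(WV l (ltn_ord l)) gdot_sumr.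
by apply: eq_bigr => i _; rewrite gdotZr !(gdotC (W _) (V i)) mulrC.
Qed.

Lemma span2 (R : realType) n (W0 W1 x : 'rV[R]_n) :
  (x <= col_mx W0 W1)%MS -> exists a b : R, x = a *: W0 + b *: W1.
Proof.
move=> /submxP [D ->]; rewrite -[D]hsubmxK mul_row_col.
rewrite [lsubmx D]mx11_scalar [rsubmx D]mx11_scalar !mul_scalar_mx.
by eexists; eexists.
Qed.

Lemma K2_inv (R : realType) n (T : 'rV[R]_n -> 'rV[R]_n -> 'rV[R]_n)
   (V0 V1 W0 W1 : 'rV[R]_n) (a b c d : R) :
  (forall (x : R) u v w, T (x *: u + v) w = x *: T u w + T v w) ->
  (forall (x : R) u v w, T w (x *: u + v) = x *: T w u + T w v) ->
  T W1 W0 = T W0 W1 ->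
  V0 = a *: W0 + b *: W1 -> V1 = c *: W0 + d *: W1 ->
  a ^+ 2 + b ^+ 2 = 1 -> c ^+ 2 + d ^+ 2 = 1 -> a * c + b * d = 0 ->
  gdot (T V0 V0) (T V1 V1) - gdot (T V1 V0) (T V0 V1) =
  gdot (T W0 W0) (T W1 W1) - gdot (T W1 W0) (T W0 W1).
Proof.
move=> hl hr sym -> -> h1 h2 h3.
have T0l : forall w, T 0 w = 0.
  move=> w; have := hl 1 0 0 w; rewrite scaler0 addr0 scale1r => h.
  by rewrite -[X in X = _]addr0 in h; move/addrI: h => <-.
have T0r : forall w, T w 0 = 0.
  move=> w; have := hr 1 0 0 w; rewrite scaler0 addr0 scale1r => h.
  by rewrite -[X in X = _]addr0 in h; move/addrI: h => <-.
have TlD : forall u v w, T (u + v) w = T u w + T v w.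
  by move=> u v w; have := hl 1 u v w; rewrite !scale1r.
have TlZ : forall x u w, T (x *: u) w = x *: T u w.
  by move=> x u w; have := hl x u 0 w; rewrite addr0 T0l addr0.
have TrD : forall u v w, T w (u + v) = T w u + T w v.
  by move=> u v w; have := hr 1 u v w; rewrite !scale1r.
have TrZ : forall x u w, T w (x *: u) = x *: T w u.
  by move=> x u w; have := hr x u 0 w; rewrite addr0 T0r addr0.
rewrite !(TlD, TlZ, TrD, TrZ) sym.
set p0 := T W0 W0; set p1 := T W0 W1; set p2 := T W1 W1.
rewrite !(gdotDl, gdotDr, gdotZl, gdotZr).
rewrite (gdotC p1 p0) (gdotC p2 p0) (gdotC p2 p1).
have e : (a * d - b * c) ^+ 2 = 1.
  have -> : (a * d - b * c) ^+ 2 = (a ^+ 2 + b ^+ 2) * (c ^+ 2 + d ^+ 2) - (a * c + b * d) ^+ 2.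
    ring.
  rewrite h1 h2 h3; ring.
transitivity ((a * d - b * c) ^+ 2 * (gdot p0 p2 - gdot p1 p1)); last by rewrite e mul1r.
ring.
Qed.

Lemma dsum_eq (R : realType) n r (t : nat -> nat -> 'rV[R]_n) :
  (forall i j, (i < r)%N -> (j < r)%N -> t i j = t j i) ->
  \sum_(i < r) \sum_(j < r) (gdot (t j i) (t i j) - gdot (t i i) (t j j))
   = \sum_(i < r) \sum_(j < r) gdot (t i j) (t i j)
     - gdot (\sum_(i < r) t i i) (\sum_(i < r) t i i).
Proof.
move=> sym; rewrite gdot_suml -sumrB; apply: eq_bigr => i _.
rewrite gdot_sumr -sumrB; apply: eq_bigr => j _.
by rewrite sym.
Qed.

Lemma Dt_inv (R : realType) n r (Vsp : 'M[R]_n) (T : 'rV[R]_n -> 'rV[R]_n -> 'rV[R]_n)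
  (V W : nat -> 'rV[R]_n) :
  (3 <= r)%N ->
  (forall (a : R) u v w, T (a *: u + v) w = a *: T u w + T v w) ->
  (forall (a : R) u v w, T w (a *: u + v) = a *: T w u + T w v) ->
  (forall u v, (u <= Vsp)%MS -> (v <= Vsp)%MS -> T u v = T v u) ->
  isVbasis Vsp r V -> isVbasis Vsp r W -> \rank Vsp = r ->
  (col_mx (W 0%N) (W 1%N) == col_mx (V 0%N) (V 1%N))%MS ->
  Dt r (fun i j => T (V i) (V j)) = Dt r (fun i j => T (W i) (W j)).
Proof.
move=> hr3 hl hr sym hV hW rk hPi.
have r0 : (0 < r)%N by apply: leq_trans hr3.
have r1 : (1 < r)%N by apply: leq_trans hr3.
have symV : forall i j, (i < r)%N -> (j < r)%N -> T (V i) (V j) = T (V j) (V i).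
  by move=> i j hi hj; apply: sym; apply: hV.2.
have symW : forall i j, (i < r)%N -> (j < r)%N -> T (W i) (W j) = T (W j) (W i).
  by move=> i j hi hj; apply: sym; apply: hW.2.
rewrite /Dt (dsum_eq symV) (dsum_eq symW).
have hS : \sum_(i < r) T (V i) (V i) = \sum_(i < r) T (W i) (W i).
  apply/rowP => k; rewrite !summxE.
  apply: (trace_inv (B := fun x y => T x y 0 k) hV hW rk).
  - by move=> a u v w; rewrite hl !mxE.
  - by move=> a u v w; rewrite hr !mxE.
have hN : \sum_(i < r) \sum_(j < r) gdot (T (V i) (V j)) (T (V i) (V j))
        = \sum_(i < r) \sum_(j < r) gdot (T (W i) (W j)) (T (W i) (W j)).
  transitivity (\sum_(i < r) \sum_(j < r) gdot (T (V i) (W j)) (T (V i) (W j))).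
    apply: eq_bigr => i _.
    apply: (trace_inv (B := fun y y' => gdot (T (V i) y) (T (V i) y')) hV hW rk).
    - by move=> a u v w; rewrite hr gdotDl gdotZl.
    - by move=> a u v w; rewrite hr gdotDr gdotZr.
  apply: (trace_inv (B := fun x x' => \sum_(j < r) gdot (T x (W j)) (T x' (W j))) hV hW rk).
  - move=> a u v w; rewrite mulr_sumr -big_split; apply: eq_bigr => j _.
    by rewrite hl gdotDl gdotZl.
  - move=> a u v w; rewrite mulr_sumr -big_split; apply: eq_bigr => j _.
    by rewrite hl gdotDr gdotZr.
have hK : gdot (T (V 0%N) (V 0%N)) (T (V 1%N) (V 1%N)) - gdot (T (V 1%N) (V 0%N)) (T (V 0%N) (V 1%N))
   = gdot (T (W 0%N) (W 0%N)) (T (W 1%N) (W 1%N)) - gdot (T (W 1%N) (W 0%N)) (T (W 0%N) (W 1%N)).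
  move/eqmxP: hPi => hPi.
  have sub : (col_mx (V 0%N) (V 1%N) <= col_mx (W 0%N) (W 1%N))%MS by rewrite hPi.
  move: sub; rewrite col_mx_sub => /andP [s0 s1].
  have [a [b e0]] := span2 s0; have [c [d e1]] := span2 s1.
  have W00 := hW.1 0%N 0%N r0 r0; have W11 := hW.1 1%N 1%N r1 r1.
  have W01 := hW.1 0%N 1%N r0 r1; have W10 := hW.1 1%N 0%N r1 r0.
  have V00 := hV.1 0%N 0%N r0 r0; have V11 := hV.1 1%N 1%N r1 r1.
  have V01 := hV.1 0%N 1%N r0 r1.
  rewrite /= in W00 W11 W01 W10 V00 V11 V01.
  apply: (K2_inv hl hr (symW _ _ r1 r0) e0 e1).
  - move: V00; rewrite e0 !(gdotDl, gdotDr, gdotZl, gdotZr) W00 W11 W01 W10.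
    by move=> h; apply: (eq_trans _ h); ring.
  - move: V11; rewrite e1 !(gdotDl, gdotDr, gdotZl, gdotZr) W00 W11 W01 W10.
    by move=> h; apply: (eq_trans _ h); ring.
  - move: V01; rewrite e0 e1 !(gdotDl, gdotDr, gdotZl, gdotZr) W00 W11 W01 W10.
    by move=> h; apply: (eq_trans _ h); ring.
rewrite hS hN.
move: hK; set C1 := 2^-1 * (_ - _); set C2 := 2^-1 * (_ * normsq _).
move=> hK; lra.
Qed.

Lemma J_skew (R : realType) n (J : 'M[R]_n) :
  J *m J = - 1%:M -> J *m J^T = 1%:M -> J^T = - J.
Proof.
move=> h1 h2; have h3 := mulmx1C h2.
have : J^T *m (J *m J) = J by rewrite mulmxA h3 mul1mx.
move=> h; rewrite h1 mulmxN mulmx1 in h; by rewrite -[in RHS]h opprK.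
Qed.

Lemma gdotJ (R : realType) n (J : 'M[R]_n) u v :
  J^T = - J -> gdot u (v *m J) = - gdot (u *m J) v.
Proof.
move=> hJ; rewrite /gdot trmx_mul mulmxA hJ mulmxN mulNmx.
by rewrite [in LHS]mxE.
Qed.

Lemma gdot_selfJ (R : realType) n (J : 'M[R]_n) u :
  J^T = - J -> gdot u (u *m J) = 0.
Proof.
move=> hJ; have := gdotJ u u hJ; rewrite gdotC => h.
have : 2 * gdot (u *m J) u = 0 by rewrite mulr2n; lra.
by move/eqP; rewrite mulf_eq0 pnatr_eq0 /= => /eqP.
Qed.

Lemma RM_XY (R : realType) n (c : R) (J : 'M[R]_n) X Y :
  J^T = - J -> gdot X X = 1 -> gdot Y Y = 1 ->
  RM c J X Y Y X = c / 4 * (1 - gdot X Y ^+ 2) + 3 * c / 4 * gdot X (Y *m J) ^+ 2.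
Proof.
move=> hJ hX hY; rewrite /RM.
rewrite !(gdotDl, gdotNl, gdotZl) hX hY (gdotC Y X) (gdotC (Y *m J) X).
rewrite !gdot_selfJ //; ring.
Qed.

Lemma aux_nat (R : realType) (c : R) (r : nat) :
  c / 4 * (r%:R - 1) *+ r = c / 4 * (r%:R ^+ 2 - r%:R).
Proof. rewrite -mulr_natr; ring. Qed.

Lemma Qop_dot (R : realType) n r (J : 'M[R]_n) (V : nat -> 'rV[R]_n) i j :
  Defs.orthonormal r V -> (j < r)%N ->
  gdot (Qop r J V (V i)) (V j) = gdot (V i *m J) (V j).
Proof.
move=> hV hj; rewrite /Qop /vpart gdot_suml.
rewrite (eq_bigr (fun k : 'I_r => gdot (V i *m J) (V k) * (k == j :> nat)%:R)).
  by rewrite (sum_delta (fun k => gdot (V i *m J) (V k))).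
by move=> k _; rewrite gdotZl hV.
Qed.

Lemma main_identity (R : realType) n r (c : R) (J Vsp : 'M[R]_n)
  (T : 'rV[R]_n -> 'rV[R]_n -> 'rV[R]_n) (V : nat -> 'rV[R]_n) :
  J^T = - J -> (3 <= r)%N -> isVbasis Vsp r V ->
  (forall u v, (u <= Vsp)%MS -> (v <= Vsp)%MS -> T u v = T v u) ->
  tauV c J T r V - KV c J T V -
  2^-1 * (c / 4 * (r%:R ^+ 2 - r%:R - 2)
              + 3 * c / 4 * (normQ2 r J V - 2 * (gdot (V 0%N) (Qop r J V (V 1%N))) ^+ 2)
              - r%:R ^+ 2 * (r%:R - 2) / (r%:R - 1) * normsq (meanCurv T r V))
  = Dt r (fun i j => T (V i) (V j)).
Proof.
move=> hJ hr [hV hVs] sym.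
have r0 : (0 < r)%N by apply: leq_trans hr.
have r1 : (1 < r)%N by apply: leq_trans hr.
set y := fun i j : nat => gdot (V i) (V j *m J).
have hQ : normQ2 r J V = \sum_(i < r) \sum_(j < r) y i j ^+ 2.
  apply: eq_bigr => i _; apply: eq_bigr => j _.
  by rewrite Qop_dot // gdotC gdotJ // gdotC sqrrN.
have hx : gdot (V 0%N) (Qop r J V (V 1%N)) = y 0%N 1%N.
  by rewrite gdotC Qop_dot // gdotC.
have hRM : forall i j : 'I_r, RM c J (V i) (V j) (V j) (V i) =
    c / 4 * (1 - (i == j :> nat)%:R) + 3 * c / 4 * y i j ^+ 2.
  move=> i j; rewrite RM_XY ?hV ?eqxx //.
  have -> : ((i == j :> nat)%:R : R) ^+ 2 = (i == j :> nat)%:R.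
    by case: (i == j :> nat); rewrite ?expr1n ?expr0n.
  by [].
have hRS : \sum_(i < r) \sum_(j < r) RM c J (V i) (V j) (V j) (V i)
    = c / 4 * (r%:R ^+ 2 - r%:R) + 3 * c / 4 * \sum_(i < r) \sum_(j < r) y i j ^+ 2.
  rewrite (eq_bigr (fun i : 'I_r => c / 4 * (r%:R - 1) + 3 * c / 4 * \sum_(j < r) y i j ^+ 2)); last first.
    move=> i _; rewrite (eq_bigr _ (fun j _ => hRM i j)) big_split /= -!mulr_sumr.
  congr (_ * _ + _); rewrite sumrB sumr_const card_ord.
  rewrite (eq_bigr (fun j : 'I_r => 1 * (i == j :> nat)%:R)); last by move=> j _; rewrite mul1r.
  by rewrite (sum_delta_r (fun _ => 1)).
  rewrite big_split /= sumr_const card_ord -mulr_sumr .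
  by rewrite aux_nat.
have hRM01 : RM c J (V 0%N) (V 1%N) (V 1%N) (V 0%N) = c / 4 + 3 * c / 4 * y 0%N 1%N ^+ 2.
  by rewrite RM_XY ?hV ?eqxx // expr0n /= subr0 mulr1.
rewrite /tauV /KV /Rker hQ hx hRM01 /Dt /meanCurv.
rewrite (eq_bigr (fun i : 'I_r => \sum_(j < r) RM c J (V i) (V j) (V j) (V i)
   + \sum_(j < r) (gdot (T (V j) (V i)) (T (V i) (V j)) - gdot (T (V i) (V i)) (T (V j) (V j))))); last first.
  by move=> i _; rewrite -big_split; apply: eq_bigr => j _ /=; ring.
rewrite big_split /= hRS.
set X := \sum_(i < r) \sum_(j < r) (_ - _).
set Y := \sum_(i < r) \sum_(j < r) y i j ^+ 2.
set Z := normsq _.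
set G1 := gdot (T (V 0%N) (V 0%N)) _.
set G2 := gdot (T (V 1%N) (V 0%N)) _.
set Y1 := y 0%N 1%N.
set K := r%:R ^+ 2 * _ / _.
by field.
Qed.

Lemma horizD (R : realType) n (Vsp : 'M[R]_n) u v :
  horizontal Vsp u -> horizontal Vsp v -> horizontal Vsp (u + v).
Proof. by rewrite /horizontal mulmxDl => -> ->; rewrite addr0. Qed.
Lemma horizZ (R : realType) n (Vsp : 'M[R]_n) (a : R) u :
  horizontal Vsp u -> horizontal Vsp (a *: u).
Proof. by rewrite /horizontal -scalemxAl => ->; rewrite scaler0. Qed.
Lemma horizN (R : realType) n (Vsp : 'M[R]_n) u :
  horizontal Vsp u -> horizontal Vsp (- u).
Proof. by move=> h; rewrite -scaleN1r; apply: horizZ. Qed.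
Lemma horizB (R : realType) n (Vsp : 'M[R]_n) u v :
  horizontal Vsp u -> horizontal Vsp v -> horizontal Vsp (u - v).
Proof. by move=> hu hv; apply: horizD => //; apply: horizN. Qed.
Lemma horiz_sum (R : realType) n (Vsp : 'M[R]_n) (I : Type) (s : seq I) (P : pred I) (f : I -> 'rV[R]_n) :
  (forall i, P i -> horizontal Vsp (f i)) -> horizontal Vsp (\sum_(i <- s | P i) f i).
Proof.
move=> hf; elim/big_rec: _ => [|i x Pi hx]; first by rewrite /horizontal mul0mx.
by apply: horizD => //; apply: hf.
Qed.

Lemma refl_dot (R : realType) n (u v w : 'rV[R]_n) :
  gdot (u - (gdot u w * (gdot w w)^-1 * 2) *: w) (v - (gdot v w * (gdot w w)^-1 * 2) *: w)
  = gdot u v.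
Proof.
have [w0|wn0] := eqVneq w 0.
  by rewrite w0 !gdot0r !mul0r !scale0r !subr0.
have ww : gdot w w != 0 by apply/eqP => /gdot_eq0; apply/eqP.
rewrite !(gdotBl, gdotBr, gdotZl, gdotZr) (gdotC w v).
field; exact: ww.
Qed.

Lemma householder (R : realType) n (Vsp : 'M[R]_n) m (h : nat -> 'rV[R]_n) (e : 'rV[R]_n) :
  isHbasis Vsp m h -> horizontal Vsp e -> gdot e e = 1 -> (0 < m)%N ->
  exists h' : nat -> 'rV[R]_n, isHbasis Vsp m h' /\ h' 0%N = e.
Proof.
move=> [hh hhz] he ee m0.
set w := h 0%N - e.
set P := fun u => u - (gdot u w * (gdot w w)^-1 * 2) *: w.
have h00 := hh 0%N 0%N m0 m0; rewrite /= in h00.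
have Pdot : forall u v, gdot (P u) (P v) = gdot u v.
  by move=> u v; rewrite /P refl_dot.
exists (fun l => P (h l)); split; first split.
- move=> i j hi hj; rewrite Pdot; exact: hh.
- move=> l hl; rewrite /P; apply: horizB; first exact: hhz.
  apply: horizZ; apply: horizB => //; exact: hhz.
- rewrite /P /=.
  have [w0|wn0] := eqVneq w 0.
    rewrite w0 gdot0r !mul0r scale0r subr0; apply/eqP; rewrite -subr_eq0; exact/eqP.
  have ww : gdot w w = 2 * (1 - gdot (h 0%N) e).
    rewrite /w !(gdotBl, gdotBr) h00 ee (gdotC e); ring.
  have hw : gdot (h 0%N) w = 1 - gdot (h 0%N) e by rewrite /w gdotBr h00.
  have wn : gdot w w != 0 by apply/eqP => /gdot_eq0; apply/eqP.
  have -> : gdot (h 0%N) w * (gdot w w)^-1 * 2 = 1.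
    rewrite hw; move: wn; rewrite ww => wn.
    have : (1 - gdot (h 0%N) e) != 0 by apply: contraNneq wn => ->; rewrite mulr0.
    move=> hn; field; exact: hn.
  by rewrite scale1r /w opprB addrC subrK.
Qed.

Lemma VC_S (R : realType) n r (t : nat -> nat -> 'rV[R]_n) :
  (3 <= r)%N -> VC r t ->
  \sum_(i < r) t i i = (r%:R - 1) *: (t 0%N 0%N + t 1%N 1%N).
Proof.
move=> hr [h1 h2 h3].
rewrite (sum3 (fun i => t i i)); last by apply: ltnW.
rewrite (eq_big_nat _ _ h3) sumr_const_nat -scaler_nat.
rewrite -[X in X + _ = _]scale1r -scalerDl.
congr (_ *: _); rewrite natrB; last by apply: ltnW.
ring.
Qed.

Lemma condE_to_VC (R : realType) n m (Vsp : 'M[R]_n)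
  (T : 'rV[R]_n -> 'rV[R]_n -> 'rV[R]_n) (V : nat -> 'rV[R]_n) :
  \rank Vsp = (n - m)%N -> (2 < n - m)%N ->
  (forall (a : R) u v w, T (a *: u + v) w = a *: T u w + T v w) ->
  (forall (a : R) u v w, T w (a *: u + v) = a *: T w u + T w v) ->
  (forall u v, (u <= Vsp)%MS -> (v <= Vsp)%MS ->
     T u v = T v u /\ horizontal Vsp (T u v)) ->
  isVbasis Vsp (n - m) V ->
  condE Vsp T (n - m) m V -> VC (n - m) (fun i j => T (V i) (V j)).
Proof.
move=> hrk hr3 hTl hTr hsym hV [V' [h' [hV' hh' hPi _ [c1 c2 c3 c4 c5]]]].
set r := (n - m)%N in hrk hr3 hV hV' c1 c2 c3 c4 c5 *.
have hmn : (m <= n)%N by apply: ltnW; rewrite -subn_gt0; apply: leq_trans hr3.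
have hz := horiz_zero hh' hrk hmn.
have Th : forall i j, (i < r)%N -> (j < r)%N -> horizontal Vsp (T (V' i) (V' j)).
  by move=> i j hi hj; apply: (hsym _ _ (hV'.2 i hi) (hV'.2 j hj)).2.
have r0 : (0 < r)%N by apply: leq_trans hr3.
have r1 : (1 < r)%N by apply: leq_trans hr3.
have VCW : VC r (fun i j => T (V' i) (V' j)).
  split.
  - move=> j hj; have jr : (j < r)%N by case/andP: hj.
    split; apply: hz.
    + exact: (Th _ _ r0 jr).
    + by move=> l hl; have [] := c1 l j hl hj.
    + exact: (Th _ _ r1 jr).
    + by move=> l hl; have [] := c1 l j hl hj.
  - move=> i j hi hj hij; have ir : (i < r)%N by case/andP: hi.
    have jr : (j < r)%N by case/andP: hj.
    apply: hz; first exact: (Th _ _ ir jr).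
    move=> l hl; case: l hl => [|l] hl; first exact: c2.
    by apply: c3.
  - move=> i hi; have ir : (i < r)%N by case/andP: hi.
    apply/eqP; rewrite -subr_eq0; apply/eqP; apply: hz.
      by apply: horizB; [exact: (Th _ _ ir ir) | apply: horizD; [exact: (Th _ _ r0 r0) | exact: (Th _ _ r1 r1)]].
    move=> l hl; rewrite gdotBl gdotDl.
    case: l hl => [|l] hl.
      by rewrite (c5 i hi) subrr.
    have hl1 : (1 <= l.+1 < m)%N by rewrite hl.
    by rewrite (c3 _ i i hl1 hi hi) (c4 _ hl1) subrr.
have symW : forall i j, (i < r)%N -> (j < r)%N -> T (V' i) (V' j) = T (V' j) (V' i).
  by move=> i j hi hj; apply: (hsym _ _ (hV'.2 i hi) (hV'.2 j hj)).1.
have symV : forall i j, (i < r)%N -> (j < r)%N -> T (V i) (V j) = T (V j) (V i).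
  by move=> i j hi hj; apply: (hsym _ _ (hV.2 i hi) (hV.2 j hj)).1.
have [_ DW] := Dt_prop hr3 symW.
have [_ DV] := Dt_prop hr3 symV.
apply/DV; rewrite (Dt_inv hr3 hTl hTr _ hV hV' hrk hPi); first exact/DW.
by move=> u v hu hv; apply: (hsym u v hu hv).1.
Qed.

Lemma natr_facts (R : realType) (r : nat) : (2 < r)%N ->
  (r%:R : R) != 0 /\ (r%:R - 1 : R) != 0.
Proof.
move=> hr; have r3 : (3 : R) <= r%:R by rewrite (ler_nat R 3 r).
by split; apply/eqP => e; lra.
Qed.

Lemma VC_to_condE (R : realType) n m (Vsp : 'M[R]_n)
  (T : 'rV[R]_n -> 'rV[R]_n -> 'rV[R]_n) (V h : nat -> 'rV[R]_n) :
  \rank Vsp = (n - m)%N -> (2 < n - m)%N ->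
  (forall u v, (u <= Vsp)%MS -> (v <= Vsp)%MS ->
     T u v = T v u /\ horizontal Vsp (T u v)) ->
  isVbasis Vsp (n - m) V -> isHbasis Vsp m h ->
  VC (n - m) (fun i j => T (V i) (V j)) -> condE Vsp T (n - m) m V.
Proof.
move=> hrk hr3 hsym hV hh hVC.
set r := (n - m)%N in hrk hr3 hV hVC *.
have hmn : (m <= n)%N by apply: ltnW; rewrite -subn_gt0; apply: leq_trans hr3.
have r0 : (0 < r)%N by apply: leq_trans hr3.
have r1 : (1 < r)%N by apply: leq_trans hr3.
have Th : forall i j, (i < r)%N -> (j < r)%N -> horizontal Vsp (T (V i) (V j)).
  by move=> i j hi hj; apply: (hsym _ _ (hV.2 i hi) (hV.2 j hj)).2.
set H := meanCurv T r V.
set a := T (V 0%N) (V 0%N) + T (V 1%N) (V 1%N).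
have hS := VC_S hr3 hVC.
have [hr0 hr1] := natr_facts R hr3.
have haH : a = ((r%:R - 1)^-1 * r%:R) *: H.
  rewrite /H /meanCurv hS !scalerA.
  have -> : (r%:R - 1)^-1 * r%:R * r%:R^-1 * (r%:R - 1) = 1 :> R.
    by field; rewrite hr0 hr1.
  by rewrite scale1r.
have Hh : horizontal Vsp H.
  by apply: horizZ; apply: horiz_sum => i _; apply: Th.
set e := (Num.sqrt (normsq H))^-1 *: H.
have [h' [hh' he ha]] : exists h' : nat -> 'rV[R]_n,
    [/\ isHbasis Vsp m h', H != 0 -> h' 0%N = e &
        forall l, (1 <= l < m)%N -> gdot a (h' l) = 0].
  have [H0|Hn0] := eqVneq H 0.
    exists h; split => //.
    by move=> l _; rewrite haH H0 scaler0 gdot0l.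
  have m0 : (0 < m)%N.
    rewrite lt0n; apply/negP => /eqP m0; move: Hn0.
    by rewrite (horiz_zero hh hrk hmn Hh) ?eqxx // => l; rewrite m0.
  have HH : 0 < gdot H H.
    rewrite lt_def gdot_ge0 andbT; apply/eqP => /gdot_eq0 h0; by rewrite h0 eqxx in Hn0.
  have s0 : 0 < Num.sqrt (normsq H) by rewrite sqrtr_gt0.
  have ee : gdot e e = 1.
    rewrite gdotZl gdotZr mulrA -expr2 exprVn sqr_sqrtr ?mulVf //.
      by apply/eqP => e0; move: HH; rewrite -/(normsq H) e0 ltxx.
    exact: ltW.
  have [h' [hh' h'0]] := householder hh (horizZ _ Hh) ee m0.
  exists h'; split => // l /andP [l1 lm].
  have l0 : (0 < l)%N by [].
  have : gdot (h' 0%N) (h' l) = 0.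
    rewrite (hh'.1 0%N l m0 lm).
    by case: l l1 lm l0.
  rewrite h'0 gdotZl => /eqP; rewrite mulf_eq0 invr_eq0 => /orP [/eqP s00|/eqP key].
    by rewrite s00 ltxx in s0.
  by rewrite haH gdotZl key mulr0.
case: hVC => [c1 c2 c3].
exists V, h'; split.
- exact: hV.
- exact: hh'.
- by apply/eqmxP; exact: eqmx_refl.
- by move=> /= Hn0; rewrite he.
split.
- by move=> l j hl hj; rewrite !(c1 j hj).1 !(c1 j hj).2 !gdot0l.
- by move=> i j hi hj hij; rewrite (c2 i j hi hj hij) gdot0l.
- move=> l i j hl hi hj; have [<-|hij] := eqVneq i j.
    by rewrite (c3 i hi) ha.
  by rewrite (c2 i j hi hj) ?gdot0l //; apply/eqP.
- by move=> l hl; rewrite -gdotDl ha.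
- by move=> j hj; rewrite -gdotDl (c3 j hj).
Qed.

Theorem mainTheorem4 (R : realType) (k m : nat) (c : R)
  (J Vsp : 'M[R]_(2 * k))
  (T : 'rV[R]_(2 * k) -> 'rV[R]_(2 * k) -> 'rV[R]_(2 * k))
  (V h : nat -> 'rV[R]_(2 * k)) :
  (* Kaehler (Hermitian) structure at p *)
  J *m J = - 1%:M -> J *m J^T = 1%:M ->
  (* vertical space of dimension r = n - m > 2 *)
  \rank Vsp = (2 * k - m)%N -> (2 < 2 * k - m)%N ->
  (* O'Neill's tensor: bilinear, symmetric with horizontal values on vertical vectors *)
  (forall (a : R) u v w, T (a *: u + v) w = a *: T u w + T v w) ->
  (forall (a : R) u v w, T w (a *: u + v) = a *: T w u + T w v) ->
  (forall u v, (u <= Vsp)%MS -> (v <= Vsp)%MS ->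
     T u v = T v u /\ horizontal Vsp (T u v)) ->
  isVbasis Vsp (2 * k - m) V -> isHbasis Vsp m h ->
  let r := (2 * k - m)%N in
  let rhs := 2^-1 * (c / 4 * (r%:R ^+ 2 - r%:R - 2)
              + 3 * c / 4 * (normQ2 r J V - 2 * (gdot (V 0%N) (Qop r J V (V 1%N))) ^+ 2)
              - r%:R ^+ 2 * (r%:R - 2) / (r%:R - 1) * normsq (meanCurv T r V)) in
  tauV c J T r V - KV c J T V >= rhs /\
  (tauV c J T r V - KV c J T V = rhs <-> condE Vsp T r m V).
Proof.
move=> hJ1 hJ2 hrk hr3 hl hr hsym hV hh r rhs.
have hJ := J_skew hJ1 hJ2.
have sym : forall u v, (u <= Vsp)%MS -> (v <= Vsp)%MS -> T u v = T v u.
  by move=> u v hu hv; apply: (hsym u v hu hv).1.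
have symV : forall i j, (i < r)%N -> (j < r)%N -> T (V i) (V j) = T (V j) (V i).
  by move=> i j hi hj; apply: sym; apply: hV.2.
have e : tauV c J T r V - KV c J T V - rhs = Dt r (fun i j => T (V i) (V j)).
  exact: (main_identity c hJ hr3 hV sym).
have [D0 DE] := Dt_prop hr3 symV.
split; first by rewrite -subr_ge0 e.
split => H.
- apply: (VC_to_condE hrk hr3 hsym hV hh); apply/DE.
  by rewrite -e H subrr.
- have := condE_to_VC hrk hr3 hl hr hsym hV H => /DE D.
  by apply/eqP; rewrite -subr_eq0 e D.
Qed.
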